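(* Let $q$ be a prime power and let $M=(m_{ij})$ be a $2\times 2$ matrix over $\mathbb{F}_{q^2}$ with $m_{21}\neq 0$ and $m_{12}\neq 0$. Then: (i) $\sharp(\mathrm{Num}'_0(M))\ge\lceil (q+1)/2\rceil$; (ii) if $(-m_{12}/m_{21})^{q+1}\neq 1$, then $\sharp(\mathrm{Num}'_0(M))\ge q+1$.
   Context: The Hermitian form on $\mathbb{F}_{q^2}^n$ is $\langle u,v\rangle=\sum_i u_i^q v_i$. For an $n\times n$ matrix $M$ over $\mathbb{F}_{q^2}$ with $n\ge 2$, $\mathrm{Num}'_0(M)=\{\langle u,Mu\rangle: u\in\mathbb{F}_{q^2}^n\setminus\{0\},\ \langle u,u\rangle=0\}$. *)

(* Defs.v *)
From HB Require Import structures.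
From mathcomp Require Import all_boot all_order all_algebra all_field.
Set Implicit Arguments. Unset Strict Implicit. Unset Printing Implicit Defensive.
Import GRing.Theory.
Local Open Scope ring_scope.

(* Hermitian form on F^n (F = F_{q^2}): <u,v> = sum_i u_i^q v_i,
   vectors are column vectors 'cV[F]_n. *)
Definition herm (F : finFieldType) (q n : nat) (u v : 'cV[F]_n) : F :=
  \sum_(i < n) (u i 0) ^+ q * v i 0.

Definition Num0' (F : finFieldType) (q n : nat) (M : 'M[F]_n) : {set F} :=
  [set x | [exists u : 'cV[F]_n,
     [&& u != 0, herm q u u == 0 & x == herm q u (M *m u)]]].

Definition prime_power (q : nat) : Prop :=
  exists p k : nat, prime p /\ (0 < k)%N /\ q = (p ^ k)%N.

(* Main.v *)
From mathcomp Require Import all_boot all_order all_algebra all_field.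
From mathcomp Require Import zify.
From mathcomp Require Import ring.
Require Import Defs.
Import GRing.Theory.
Local Open Scope ring_scope.

Lemma card_T (F : finFieldType) (q : nat) (hq : (0 < q)%N) (hF : #|F| = (q ^ 2)%N) :
  (q.+1 <= #|[set t : F | t ^+ q.+1 == (-1)%R]|)%N.
Proof.
have m1 : (-1 : F) ^+ q.-1 = 1.
  case: (boolP (odd q)) => oq.
    by rewrite -signr_odd; move: oq; rewrite -(prednK hq) /= => /negbTE ->.
  have e : (-1 : F) = 1.
    have := expf_card (-1 : F); rewrite hF -signr_odd oddX /= (negbTE oq) expr0.
    by move=> /esym.
  by rewrite e expr1n.
set p : {poly F} := 'X^(q.+1) + 1.
have dv : p %| 'X^#|F| - 'X.
  have := subrXX ('X^(q.+1) : {poly F}) (-1) q.-1.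
  set S := \sum_(_ < _) _ => hS.
  have e1 : (-1 : {poly F}) ^+ q.-1 = 1.
    by rewrite -polyCN -rmorphXn m1.
  rewrite e1 opprK in hS.
  have -> : 'X^#|F| - 'X = ('X * S) * p.
    rewrite hF -mulrA /p [S * _]mulrC -hS mulrBr mulr1 -exprM -exprS.
    congr ('X^_ - _); rewrite -(prednK hq); lia.
  exact: dvdp_mulIr.
rewrite finField_genPoly in dv.
case: (dvdp_prod_XsubC dv) => m hm.
have sz := eqp_size hm.
rewrite size_prod_XsubC /p -polyC1 size_XnaddC // in sz.
case: sz => sz.
rewrite sz cardE; apply: uniq_leq_size.
  exact/mask_uniq/index_enum_uniq.
move=> x hx; rewrite mem_enum inE.
have := eqp_root hm x; rewrite root_prod_XsubC hx /root !hornerE.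
by rewrite addr_eq0 -sz => ->.
Qed.
Definition uu {F : finFieldType} (t : F) : 'cV[F]_2 :=
  \col_(i < 2) (if i == ord0 then 1 else t).

Lemma herm_uu (F : finFieldType) q (t : F) : herm q (uu t) (uu t) = 1 + t ^+ q.+1.
Proof.
rewrite /herm big_ord_recr big_ord_recr big_ord0 /= !mxE /= expr1n mulr1 add0r.
by rewrite exprSr.
Qed.

Lemma herm_uuM (F : finFieldType) q (t : F) (M : 'M[F]_2) :
  herm q (uu t) (M *m uu t) =
  M ord0 ord0 + M ord0 ord_max * t + t ^+ q * (M ord_max ord0 + M ord_max ord_max * t).
Proof.
rewrite /herm big_ord_recr big_ord_recr big_ord0 /= !mxE /= expr1n mul1r add0r.
rewrite !big_ord_recr !big_ord0 /= !mxE /= !add0r !mulr1.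
have -> : widen_ord (leqnSn 1) ord_max = ord0 :> 'I_2 by apply: val_inj.
by [].
Qed.

Lemma fiber (F : finFieldType) q (M : 'M[F]_2) (t s : F) :
  t ^+ q.+1 = -1 -> s ^+ q.+1 = -1 ->
  herm q (uu t) (M *m uu t) = herm q (uu s) (M *m uu s) ->
  t = s \/ M ord0 ord_max * t * s + M ord_max ord0 = 0.
Proof.
rewrite !herm_uuM !exprS => ht hs E.
move: ht hs E.
set a := t ^+ q; set b := s ^+ q.
set m00 := M ord0 ord0; set m12 := M ord0 ord_max; set m21 := M ord_max ord0.
set m22 := M ord_max ord_max => ht hs.
move/eqP; rewrite -subr_eq0 => /eqP E.
have key : (t - s) * (m12 * t * s + m21) =
  t * s * ((m00 + m12 * t + a * (m21 + m22 * t)) - (m00 + m12 * s + b * (m21 + m22 * s)))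
  - m21 * (s * (t * a + 1) - t * (s * b + 1)) - m22 * s * t * ((t * a + 1) - (s * b + 1)).
  ring.
move: key; rewrite E ht hs addNr !(mulr0, subr0, mul0r, subrr).
move/eqP; rewrite mulf_eq0 subr_eq0 => /orP [/eqP -> | /eqP ->]; by [left | right].
Qed.

Theorem proposition4 (F : finFieldType) (q : nat)
  (hq : prime_power q) (hF : #|F| = (q ^ 2)%N)
  (M : 'M[F]_2)
  (h21 : M ord_max ord0 != 0) (h12 : M ord0 ord_max != 0) :
  ((q + 2) %/ 2 <= #|Num0' q M|)%N /\
  ((- M ord0 ord_max / M ord_max ord0) ^+ q.+1 != 1 ->
     (q.+1 <= #|Num0' q M|)%N).
Proof.
have q0 : (0 < q)%N.
  case: q hF {hq} => // /eqP; rewrite -cardsT => /eqP/cards0_eq h.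
  by have := in_setT (0 : F); rewrite h inE.
set T := [set t : F | t ^+ q.+1 == (-1)%R].
have cT := @card_T F q q0 hF; rewrite -/T in cT.
set f := fun t => herm q (uu t) (M *m uu t).
have sub : f @: T \subset Num0' q M.
  apply/subsetP => y /imsetP [t]; rewrite inE => /eqP ht ->.
  rewrite inE; apply/existsP; exists (uu t); rewrite herm_uu ht addrN !eqxx andbT /=.
  rewrite andbT; apply/eqP => /matrixP /(_ ord0 0); rewrite !mxE /= => /eqP; by rewrite oner_eq0.
have leN := subset_leq_card sub.
split.
  suff : (q.+1 <= 2 * #|f @: T|)%N.
    move=> h; apply: leq_trans leN; lia.
  apply: (leq_trans cT).
  rewrite -sum1_card (partition_big_imset f) /= mulnC -sum_nat_const.
  apply: leq_sum => y /imsetP [t0 Ht0 ->].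
  rewrite sum1dep_card.
  set s0 := (M ord0 ord_max * t0)^-1 * - M ord_max ord0.
  apply: (@leq_trans #|[set t0; s0]|); last by rewrite cards2; case: (t0 != s0).
  apply: subset_leq_card; apply/subsetP => s; rewrite !inE => /andP [Hs /eqP hfs].
  move: Ht0 Hs; rewrite !inE => /eqP ht /eqP hs.
  case: (@fiber F q M t0 s ht hs (esym hfs)) => [-> | h]; first by rewrite eqxx.
  apply/orP; right; apply/eqP.
  have t0n : t0 != 0 by apply/eqP => t00; move: ht; rewrite t00 expr0n /= => /eqP; rewrite eq_sym oppr_eq0 oner_eq0.
  have hz : M ord0 ord_max * t0 != 0 by rewrite mulf_neq0.
  rewrite /s0 -(mulKf hz s); congr (_ * _).
  by apply/eqP; rewrite -addr_eq0 h.
move=> hx; apply: leq_trans leN; rewrite card_in_imset //.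
move=> t s; rewrite !inE => /eqP ht /eqP hs hfs.
case: (@fiber F q M t s ht hs hfs) => // h; exfalso; move/eqP: hx; apply.
set x := - M ord0 ord_max / M ord_max ord0.
have h1 : x * (t * s) = 1.
  rewrite /x mulrAC.
  have -> : - M ord0 ord_max * (t * s) = M ord_max ord0 by apply/eqP; rewrite mulNr mulrA eqr_oppLR -addr_eq0 h.
  by rewrite mulfV.
have := congr1 (fun z => z ^+ q.+1) h1; rewrite /= !exprMn ht hs expr1n mulrNN !mulr1.
by [].
Qed.
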